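(* Let $A:\mathbb R^n\rightrightarrows\mathbb R^n$ be maximally monotone, $F:\mathbb R^n\to\mathbb R^n$ $L$-Lipschitz ($L>0$), $T=A+F$, and assume there exist a nonempty $\mathcal S^\star\subseteq\operatorname{zer}T$ and $\rho\in(-\tfrac1{2L},\infty)$ with $\langle v,z-z^\star\rangle\ge\rho\|v\|^2$ for all $z^\star\in\mathcal S^\star$ and all $(z,v)\in\operatorname{graph}T$. Let $\gamma\in(\max\{0,-2\rho\},\tfrac1L]$, $\delta\in(-\tfrac\gamma2,\rho]$ and $\bar\alpha\in(0,1+\tfrac{2\delta}{\gamma})$, let $H=\mathrm{id}-\gamma F$, and for $z^0\in\mathbb R^n$ generate $$\bar z^k=(\mathrm{id}+\gamma A)^{-1}(z^k-\gamma Fz^k),\qquad z^{k+1}=z^k+\bar\alpha(H\bar z^k-Hz^k).$$ Then for every $z^\star\in\mathcal S^\star$ and $m\ge0$, $$\min_{k=0,\dots,m}\|H\bar z^k-Hz^k\|^2\le\frac{\|z^0-z^\star\|^2}{\kappa(m+1)},\qquad \kappa=\bar\alpha\big(1+\tfrac{2\delta}{\gamma}-\bar\alpha\big).$$ Moreover, $(\bar z^k)$ is bounded with all limit points in $\operatorname{zer}T$, and if in addition $\gamma<\tfrac1L$ and $\mathcal S^\star=\operatorname{zer}T$, then $(z^k)$ and $(\bar z^k)$ converge to the same point of $\operatorname{zer}T$.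
   Context: $\operatorname{zer}T=\{z:0\in Tz\}$, $\operatorname{graph}T=\{(z,v):v\in Tz\}$. *)

(* Defs.v *)
From mathcomp Require Import all_boot all_order all_algebra.
From mathcomp Require Import reals.
Set Implicit Arguments. Unset Strict Implicit. Unset Printing Implicit Defensive.
Import Order.TTheory GRing.Theory Num.Theory.
Local Open Scope ring_scope.

Section Defs.
Variables (R : realType) (n : nat).
Notation vec := 'rV[R]_n.

Definition dotp (u v : vec) : R := \sum_(i < n) u 0 i * v 0 i.
Definition enorm (u : vec) : R := Num.sqrt (dotp u u).

(* set-valued operators R^n ⇉ R^n, given by their graph: A z v  <->  v ∈ A z *)
Definition setop := vec -> vec -> Prop.

Definition monotone (A : setop) : Prop :=
  forall x u y v, A x u -> A y v -> 0 <= dotp (u - v) (x - y).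

Definition maximally_monotone (A : setop) : Prop :=
  monotone A /\
  forall B : setop, monotone B -> (forall x u, A x u -> B x u) ->
    forall x u, B x u -> A x u.

Definition lipschitz (L : R) (F : vec -> vec) : Prop :=
  forall x y, enorm (F x - F y) <= L * enorm (x - y).

Definition sum_op (A : setop) (F : vec -> vec) : setop :=
  fun z v => exists a, A z a /\ v = a + F z.

Definition zer (T : setop) : vec -> Prop := fun z => T z 0.

Definition bounded_seq (u : nat -> vec) : Prop :=
  exists M : R, forall k, enorm (u k) <= M.

Definition converges_to (u : nat -> vec) (x : vec) : Prop :=
  forall e : R, 0 < e -> exists N, forall k, (N <= k)%N -> enorm (u k - x) < e.

Definition limit_point (u : nat -> vec) (x : vec) : Prop :=
  forall e : R, 0 < e -> forall N, exists k, (N <= k)%N /\ enorm (u k - x) < e.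

End Defs.

(* Main.v *)
Require Import Defs.
From mathcomp Require Import all_boot all_order all_algebra.
From mathcomp Require Import reals.
From mathcomp Require Import ring lra.
From mathcomp Require all_classical all_analysis.
From Stdlib Require Classical_Prop.
Set Implicit Arguments. Unset Strict Implicit. Unset Printing Implicit Defensive.
Import Order.TTheory GRing.Theory Num.Theory.
Local Open Scope ring_scope.
Section Basic.
Variables (R : realType) (n : nat).
Notation vec := 'rV[R]_n.
Implicit Types u v w : vec.

Lemma dotpC u v : dotp u v = dotp v u.
Proof. by apply: eq_bigr => i _; rewrite mulrC. Qed.
Lemma dotpDl u v w : dotp (u + v) w = dotp u w + dotp v w.
Proof. by rewrite /dotp -big_split; apply: eq_bigr => i _; rewrite !mxE mulrDl. Qed.
Lemma dotpZl (a : R) u w : dotp (a *: u) w = a * dotp u w.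
Proof. by rewrite /dotp mulr_sumr; apply: eq_bigr => i _; rewrite !mxE mulrA. Qed.
Lemma dotpNl u w : dotp (- u) w = - dotp u w.
Proof. by rewrite -scaleN1r dotpZl mulN1r. Qed.
Lemma dotpBl u v w : dotp (u - v) w = dotp u w - dotp v w.
Proof. by rewrite dotpDl dotpNl. Qed.
Lemma dotpDr u v w : dotp w (u + v) = dotp w u + dotp w v.
Proof. by rewrite dotpC dotpDl !(dotpC w). Qed.
Lemma dotpZr (a : R) u w : dotp w (a *: u) = a * dotp w u.
Proof. by rewrite dotpC dotpZl dotpC. Qed.
Lemma dotpNr u w : dotp w (- u) = - dotp w u.
Proof. by rewrite dotpC dotpNl dotpC. Qed.
Lemma dotpBr u v w : dotp w (u - v) = dotp w u - dotp w v.
Proof. by rewrite dotpDr dotpNr. Qed.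
Lemma dotp0l w : dotp 0 w = 0.
Proof. by rewrite /dotp big1 // => i _; rewrite mxE mul0r. Qed.
Lemma dotp0r w : dotp w 0 = 0.
Proof. by rewrite dotpC dotp0l. Qed.
Lemma dotp_ge0 u : 0 <= dotp u u.
Proof. by apply: sumr_ge0 => i _; rewrite -expr2 sqr_ge0. Qed.
Lemma enorm_ge0 u : 0 <= enorm u.
Proof. exact: sqrtr_ge0. Qed.
Lemma enorm_sq u : enorm u ^+ 2 = dotp u u.
Proof. by rewrite sqr_sqrtr // dotp_ge0. Qed.
Lemma enormN u : enorm (- u) = enorm u.
Proof. by rewrite /enorm dotpNl dotpNr opprK. Qed.
Lemma enormB u v : enorm (u - v) = enorm (v - u).
Proof. by rewrite -enormN opprB. Qed.
Lemma enormZ (a : R) u : enorm (a *: u) = `|a| * enorm u.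
Proof. by rewrite /enorm dotpZl dotpZr mulrA -expr2 sqrtrM ?sqr_ge0 // sqrtr_sqr. Qed.

Lemma sq_expand u v : dotp (u + v) (u + v) = dotp u u + 2 * dotp u v + dotp v v.
Proof. rewrite dotpDl !dotpDr (dotpC v u); ring. Qed.

Lemma CS2 u v : dotp u v ^+ 2 <= dotp u u * dotp v v.
Proof.
set a := dotp u u; set b := dotp u v; set c := dotp v v.
have key : forall t : R, 0 <= a * t ^+ 2 - 2 * b * t + c.
  move=> t; have := dotp_ge0 (t *: u - v).
  rewrite dotpBl !dotpBr !dotpZl !dotpZr (dotpC v u) -/a -/b -/c.
  by move=> h; apply: le_trans h _; rewrite le_eqVlt; apply/orP; left; apply/eqP; ring.
have a0 : 0 <= a by apply: dotp_ge0.
have c0 : 0 <= c by apply: dotp_ge0.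
have [az|ap] := eqVneq a 0.
  have [bz|bn] := eqVneq b 0; first by rewrite bz expr0n /= az mul0r.
  have := key ((c + 1) / (2 * b)); rewrite az mul0r sub0r.
  have -> : 2 * b * ((c + 1) / (2 * b)) = c + 1 by field.
  lra.
have apos : 0 < a by rewrite lt_def ap a0.
have := key (b / a).
have -> : a * (b / a) ^+ 2 - 2 * b * (b / a) + c = c - b ^+ 2 / a.
  by field.
rewrite subr_ge0 ler_pdivrMr // => h; by rewrite mulrC.
Qed.

Lemma le_sq (x y : R) : 0 <= y -> x ^+ 2 <= y ^+ 2 -> x <= y.
Proof. move=> y0 h; rewrite leNgt; apply/negP => hxy; nra. Qed.

Lemma CS u v : dotp u v <= enorm u * enorm v.
Proof.
have h := CS2 u v.
case: (lerP (dotp u v) 0) => hb.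
  by apply: le_trans hb _; rewrite mulr_ge0 // enorm_ge0.
apply: le_sq; first by rewrite mulr_ge0 ?enorm_ge0.
by rewrite exprMn !enorm_sq.
Qed.

Lemma CSabs u v : `|dotp u v| <= enorm u * enorm v.
Proof.
rewrite ler_norml CS andbT.
have := CS (- u) v; rewrite enormN dotpNl; lra.
Qed.

Lemma enormD u v : enorm (u + v) <= enorm u + enorm v.
Proof.
apply: le_sq; first by rewrite addr_ge0 ?enorm_ge0.
rewrite enorm_sq sq_expand -!enorm_sq.
have := CS u v; have := enorm_ge0 u; have := enorm_ge0 v. nra.
Qed.
End Basic.

Section Step.
Variables (R : realType) (n : nat).
Notation vec := 'rV[R]_n.

Lemma sq_le_of_enorm (x y : vec) (L : R) : 0 <= L ->
  enorm x <= L * enorm y -> dotp x x <= L ^+ 2 * dotp y y.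
Proof.
move=> L0 h; rewrite -!enorm_sq -exprMn.
by rewrite ler_pXn2r ?nnegrE ?enorm_ge0 ?mulr_ge0 ?enorm_ge0.
Qed.

Lemma resolvent_sum (A : setop R n) (F : vec -> vec) (gamma : R) (z zb : vec) :
  gamma != 0 ->
  A zb (gamma^-1 *: (z - gamma *: F z - zb)) ->
  sum_op A F zb (gamma^-1 *: ((z - gamma *: F z) - (zb - gamma *: F zb))).
Proof.
move=> g0 hA; exists (gamma^-1 *: (z - gamma *: F z - zb)); split => //.
apply/rowP => i; rewrite !mxE; field => //.
Qed.

Lemma fejer_step (A : setop R n) (F : vec -> vec) (L gamma rho delta alpha : R)
  (zs z zb : vec) :
  0 < gamma -> 0 <= L -> gamma * L <= 1 -> lipschitz L F -> delta <= rho -> 0 <= alpha ->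
  (forall zz v, sum_op A F zz v -> rho * enorm v ^+ 2 <= dotp v (zz - zs)) ->
  A zb (gamma^-1 *: (z - gamma *: F z - zb)) ->
  enorm (z + alpha *: ((zb - gamma *: F zb) - (z - gamma *: F z)) - zs) ^+ 2
  <= enorm (z - zs) ^+ 2 - alpha * (1 + 2 * delta / gamma - alpha)
       * enorm ((zb - gamma *: F zb) - (z - gamma *: F z)) ^+ 2.
Proof.
move=> g0 L0 gL lip dr a0 hS hA.
set p := (z - gamma *: F z) - (zb - gamma *: F zb).
have gn0 : gamma != 0 by rewrite gt_eqF.
have h1 := hS _ _ (@resolvent_sum A F gamma z zb gn0 hA).
rewrite -/p enormZ exprMn enorm_sq dotpZl in h1.
set P := dotp p p in h1; set X := dotp p (zb - zs) in h1.
have ga : `|gamma^-1| = gamma^-1 by rewrite ger0_norm // invr_ge0 ltW.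
rewrite ga in h1.
have hX : delta / gamma * P <= X.
  have P0 : 0 <= P by apply: dotp_ge0.
  have := ler_wpM2l (ltW g0) h1.
  have -> : gamma * (rho * (gamma^-1 ^+ 2 * P)) = rho * P / gamma by field.
  have -> : gamma * (gamma^-1 * X) = X by field.
  rewrite ler_pdivrMr // => h.
  have -> : delta / gamma * P = (delta * P) / gamma by field.
  rewrite ler_pdivrMr //.
  have : delta * P <= rho * P by rewrite ler_wpM2r.
  lra.
set w := z - zb; set d := F z - F zb.
have pE : p = w - gamma *: d.
  by apply/rowP => i; rewrite !mxE; ring.
have hd : dotp d d <= L ^+ 2 * dotp w w by apply: sq_le_of_enorm => //; apply: lip.
have hq : z - zs = (zb - zs) + w by apply/rowP => i; rewrite !mxE; ring.
clearbody w d.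
set Y := dotp p w.
have hY : P <= 2 * Y.
  rewrite /P /Y pE !dotpBl !dotpBr !dotpZl !dotpZr (@dotpC _ _ d w).
  have w0 : 0 <= dotp w w by apply: dotp_ge0.
  have : gamma ^+ 2 * dotp d d <= dotp w w.
    apply: le_trans (ler_wpM2l (sqr_ge0 gamma) hd) _.
    rewrite mulrA -exprMn; apply: ler_piMl => //.
    have gL0 : 0 <= gamma * L by apply: mulr_ge0 => //; apply: ltW.
    nra.
  move=> h. nra.
have -> : z + alpha *: ((zb - gamma *: F zb) - (z - gamma *: F z)) - zs
    = (z - zs) - alpha *: p.
  by apply/rowP => i; rewrite !mxE; ring.
have -> : (zb - gamma *: F zb) - (z - gamma *: F z) = - p.
  by apply/rowP => i; rewrite /p !mxE; ring.
move: hq; set q := z - zs; clearbody q; move=> hq.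
rewrite enormN !enorm_sq -/P dotpBl !dotpBr !dotpZl !dotpZr (@dotpC _ _ q p).
rewrite (_ : dotp p q = X + Y); last by rewrite hq dotpDr.
rewrite -/P.
have -> : 2 * delta / gamma = 2 * (delta / gamma) by rewrite mulrA.
set e := delta / gamma in hX *.
have h2 : alpha * (e * P) <= alpha * X by rewrite ler_wpM2l.
have h3 : alpha * P <= alpha * (2 * Y) by rewrite ler_wpM2l.
lra.
Qed.

End Step.

Section Rest.
Variables (R : realType) (n : nat).
Notation vec := 'rV[R]_n.

Lemma enormBD (u v : vec) : enorm (u - v) <= enorm u + enorm v.
Proof. by have := enormD u (- v); rewrite enormN. Qed.

Lemma real_lim (X K : R) : 0 <= K ->
  (forall eta, 0 < eta -> eta <= 1 -> - (eta * K) <= X) -> 0 <= X.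
Proof.
move=> K0 h; rewrite leNgt; apply/negP => hX.
set eta := Num.min 1 (- X / (2 * (K + 1))).
have K1 : 0 < 2 * (K + 1) by lra.
have e0 : 0 < eta by rewrite lt_min ltr01 /= divr_gt0 // oppr_gt0.
have e1 : eta <= 1 by rewrite ge_min lexx.
have e2 : eta <= - X / (2 * (K + 1)) by rewrite ge_min lexx orbT.
have := h eta e0 e1.
have e3 : eta * (2 * (K + 1)) <= - X by rewrite -ler_pdivlMr.
nra.
Qed.


Lemma sum_mono (a : nat -> R) m d : (forall k, 0 <= a k) ->
  \sum_(k < m) a k <= \sum_(k < m + d) a k.
Proof.
move=> a0; elim: d => [|d IH]; first by rewrite addn0.
rewrite addnS big_ord_recr /=; apply: le_trans IH _.
by rewrite lerDl.
Qed.

Lemma tail_small (a : nat -> R) (C : R) : (forall k, 0 <= a k) ->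
  (forall m, \sum_(k < m) a k <= C) ->
  forall e, 0 < e -> exists N, forall k, (N <= k)%N -> a k < e.
Proof.
move=> a0 hC e e0.
apply: Classical_Prop.NNPP => hn.
have hf : forall N, exists k, (N <= k)%N /\ e <= a k.
  move=> N; apply: Classical_Prop.NNPP => hk; apply: hn; exists N => k hNk.
  rewrite ltNge; apply/negP => hek; apply: hk; by exists k.
have hj : forall j : nat, exists m, j%:R * e <= \sum_(k < m) a k.
  elim=> [|j [m hm]]; first by exists 0%N; rewrite mul0r big_ord0.
  have [k [hmk hek]] := hf m.
  exists k.+1; rewrite big_ord_recr /= mulrSr mulrDl mul1r.
  apply: lerD => //; apply: le_trans hm _.
  by rewrite -(subnKC hmk) sum_mono.
have C0 : 0 <= C by have := hC 0%N; rewrite big_ord0.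
have := archi_boundP (divr_ge0 C0 (ltW e0)).
set j := Num.Def.archi_bound _ => hb.
have [m hm] := hj j.
have := hC m.
have : C < j%:R * e by rewrite -ltr_pdivrMr.
lra.
Qed.

Lemma bigmin_le (f : nat -> R) (x0 : R) m i : (i <= m)%N ->
  \big[Num.min/x0]_(k < m.+1) f k <= f i.
Proof.
elim: m f i => [|m IH] f i.
  by rewrite leqn0 => /eqP ->; rewrite big_ord_recl /= ge_min lexx.
rewrite big_ord_recl ge_min; case: i => [|i] hi; first by rewrite lexx.
apply/orP; right.
rewrite (eq_bigr (fun k : 'I_m.+1 => f (k.+1))); last by move=> k _; rewrite lift0.
exact: (IH (fun k => f k.+1) i).
Qed.

Lemma zb_bound (A : setop R n) (F : vec -> vec) (L gamma : R) (z zb zs : vec) :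
  monotone A -> 0 < gamma -> 0 <= L -> lipschitz L F ->
  zer (sum_op A F) zs ->
  A zb (gamma^-1 *: (z - gamma *: F z - zb)) ->
  enorm (zb - zs) <= (1 + gamma * L) * enorm (z - zs).
Proof.
move=> mono g0 L0 lip [a [ha a0]] hA.
have hm := mono _ _ _ _ hA ha.
set q := (z - zs) - gamma *: (F z - F zs).
set t := zb - zs.
have e1 : gamma^-1 *: (z - gamma *: F z - zb) - a = gamma^-1 *: (q - t).
  have -> : a = - F zs by apply/eqP; rewrite -addr_eq0 -a0.
  have gn : gamma != 0 by rewrite gt_eqF.
  by apply/rowP => i; rewrite !mxE; field.
rewrite e1 dotpZl dotpBl in hm.
have ht : dotp t t <= dotp q t.
  by rewrite -subr_ge0; move: hm; rewrite pmulr_rge0 // invr_gt0.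
have hq : enorm q <= (1 + gamma * L) * enorm (z - zs).
  apply: (le_trans (enormBD _ _)).
  rewrite enormZ (ger0_norm (ltW g0)).
  have := ler_wpM2l (ltW g0) (lip z zs). lra.
apply: le_trans hq.
have h1 : enorm t ^+ 2 <= enorm q * enorm t.
  by rewrite enorm_sq; apply: (le_trans ht); apply: CS.
have := enorm_ge0 t; have := enorm_ge0 q. nra.
Qed.

Lemma closed_zer (A : setop R n) (F : vec -> vec) (L : R) (x : vec)
  (zb v : nat -> vec) :
  maximally_monotone A -> 0 <= L -> lipschitz L F ->
  (forall k, sum_op A F (zb k) (v k)) ->
  (forall e, 0 < e -> exists N, forall k, (N <= k)%N -> enorm (v k) < e) ->
  limit_point zb x -> zer (sum_op A F) x.
Proof.
move=> [mono maxi] L0 lip hs hv hlp.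
have key : forall y u, A y u -> 0 <= dotp (u + F x) (y - x).
  move=> y u hyu; set c := u + F x; set b := y - x.
  have K0 : 0 <= (L + 1) * enorm b + enorm c + (L + 1).
    by rewrite !addr_ge0 ?mulr_ge0 ?enorm_ge0 //; lra.
  apply: (real_lim K0) => eta eta0 eta1.
  have [N hN] := hv eta eta0.
  have [k [hk hsk]] := hlp eta eta0 N.
  have hvk := hN k hk.
  have [a [ha hva]] := hs k.
  have hm := mono _ _ _ _ hyu ha.
  set s := zb k - x in hsk.
  set r := (F (zb k) - F x) - v k.
  have e1 : u - a = c + r.
    have -> : a = v k - F (zb k) by rewrite hva addrK.
    by apply/rowP => i; rewrite !mxE; ring.
  have e2 : y - zb k = b - s by apply/rowP => i; rewrite !mxE; ring.
  have hr : enorm r <= (L + 1) * eta.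
    apply: (le_trans (enormBD _ _)).
    have := lip (zb k) x; rewrite -/s => hl.
    have := enorm_ge0 s. nra.
  clearbody c b s r.
  rewrite e1 e2 dotpDl !dotpBr in hm.
  have c1 := CSabs r b; have c2 := CSabs c s; have c3 := CSabs r s.
  move: c1 c2 c3; rewrite !ler_norml => /andP[_ c1] /andP[c2 _] /andP[c1' _].
  have nb := enorm_ge0 b; have nc := enorm_ge0 c; have nr := enorm_ge0 r.
  have ns := enorm_ge0 s.
  have p1 : enorm r * enorm b <= (L + 1) * eta * enorm b by apply: ler_wpM2r.
  have p2 : enorm c * enorm s <= enorm c * eta by apply: ler_wpM2l => //; apply: ltW.
  have p3 : enorm r * enorm s <= (L + 1) * eta * eta.
    apply: ler_pM => //; exact: ltW.
  have p4 : (L + 1) * eta * eta <= (L + 1) * eta.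
    rewrite -[X in _ <= X]mulr1; apply: ler_wpM2l => //.
    by apply: mulr_ge0; lra.
  nra.
have key1 : forall y u, A y u -> 0 <= dotp (u - - F x) (y - x).
  by move=> y u h; rewrite opprK; apply: key.
have key2 : forall y u, A y u -> 0 <= dotp (- F x - u) (x - y).
  move=> y u h; have -> : - F x - u = - (u + F x).
    by apply/rowP => i; rewrite !mxE; ring.
  have -> : x - y = - (y - x) by apply/rowP => i; rewrite !mxE; ring.
  by rewrite dotpNl dotpNr opprK; apply: key.
have hB : monotone (fun y u => A y u \/ (y = x /\ u = - F x)).
  move=> x1 u1 x2 u2 [h1|[-> ->]] [h2|[-> ->]].
  - exact: mono h1 h2.
  - by first [apply: key1 | apply: key2].
  - by first [apply: key1 | apply: key2].
  - by rewrite subrr dotp0l.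
have hAx := maxi _ hB (fun y u h => or_introl h) x (- F x) (or_intror (conj erefl erefl)).
by exists (- F x); split => //; rewrite addNr.
Qed.

End Rest.
Module BWmod.
Import all_classical all_analysis.
Import numFieldNormedType.Exports.
Local Open Scope classical_set_scope.
Local Open Scope ring_scope.

Section BW.
Variables (R : realType) (n : nat).
Notation vec := 'rV[R]_n.

Lemma coord_le (w : vec) i : `|w ord0 i| <= enorm w.
Proof.
apply: le_sq; first exact: enorm_ge0.
rewrite enorm_sq /dotp (bigD1 i) //= real_normK ?num_real // expr2.
by rewrite lerDl sumr_ge0 // => j _; rewrite -expr2 sqr_ge0.
Qed.

Lemma enorm_small (w : vec) (r : R) :
  (forall i, `|w ord0 i| <= r) -> enorm w ^+ 2 <= n%:R * r ^+ 2.
Proof.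
move=> h; rewrite enorm_sq /dotp.
have -> : n%:R * r ^+ 2 = \sum_(i < n) r ^+ 2.
  by rewrite sumr_const card_ord mulr_natl.
apply: ler_sum => i _; have := h i; rewrite ler_norml => /andP[h1 h2].
nra.
Qed.

Lemma bw (u : nat -> vec) (M : R) : (forall k, enorm (u k) <= M) ->
  exists x, Defs.limit_point u x.
Proof.
move=> hM.
have cK := @rV_compact R n (fun _ => `[(- M), M]%classic)
   (fun i => @segment_compact R (- M) M).
have hF : (u @ \oo) [set v : vec | forall i, `[(- M), M]%classic (v ord0 i)].
  exists 0%N => // k _ /= i.
  by rewrite in_itv /= -ler_norml; apply: le_trans (coord_le _ _) (hM k).
have [x [_ cx]] := cK (u @ \oo) _ hF.
exists x => e e0 N.
set r := e / (n.+1)%:R.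
have r0 : 0 < r by rewrite divr_gt0 // ltr0n.
have hB : nbhs x [set y : vec | forall i, `|y ord0 i - x ord0 i| < r].
  apply/nbhs_ballP; exists r => // y /= hy i.
  by move: hy => [_ /(_ ord0 i)]; rewrite /ball /= distrC.
have hA : (u @ \oo) [set y | exists k, (N <= k)%N /\ u k = y].
  by exists N => // k /= hk; exists k.
have [y [[k [hk <-]] hy]] := cx _ _ hA hB.
exists k; split => //.
have h2 : enorm (u k - x) ^+ 2 <= n%:R * r ^+ 2.
  apply: enorm_small => i; rewrite !mxE; exact: ltW.
have h3 : n%:R * r ^+ 2 < e ^+ 2.
  have n1 : (n.+1)%:R != 0 :> R by rewrite pnatr_eq0.
  rewrite (_ : n%:R * r ^+ 2 = e ^+ 2 * (n%:R / (n.+1)%:R ^+ 2)); last first.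
    by rewrite /r; field.
  rewrite gtr_pMr ?exprn_gt0 // ltr_pdivrMr ?exprn_gt0 ?ltr0n // mul1r.
  rewrite -natrX ltr_nat !expnS expn0 muln1.
  by rewrite mulSn addSn ltnS leq_addr.
rewrite ltNge; apply/negP => he.
have := @enorm_ge0 _ _ (u k - x); nra.
Qed.
End BW.
End BWmod.

Lemma lt_sq (R : realType) (x y : R) : 0 <= x -> x ^+ 2 < y ^+ 2 -> 0 <= y -> x < y.
Proof. move=> x0 h y0; rewrite ltNge; apply/negP => hyx; nra. Qed.

Theorem corollary3p2 (R : realType) (n : nat)
    (A : setop R n) (F : 'rV[R]_n -> 'rV[R]_n) (L : R)
    (Sstar : 'rV[R]_n -> Prop) (rho gamma delta alpha : R)
    (z0 : 'rV[R]_n) (z zbar : nat -> 'rV[R]_n) :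
  maximally_monotone A ->
  0 < L -> lipschitz L F ->
  (exists zs, Sstar zs) ->
  (forall zs, Sstar zs -> zer (sum_op A F) zs) ->
  - (1 / (2 * L)) < rho ->
  (forall zs, Sstar zs -> forall zz v, sum_op A F zz v ->
     rho * enorm v ^+ 2 <= dotp v (zz - zs)) ->
  Num.max 0 (- (2 * rho)) < gamma -> gamma <= 1 / L ->
  - (gamma / 2) < delta -> delta <= rho ->
  0 < alpha -> alpha < 1 + 2 * delta / gamma ->
  let H := fun x => x - gamma *: F x in
  z 0%N = z0 ->
  (* zbar k = (id + gamma A)^{-1} (z k - gamma F (z k)), i.e.
     z k - gamma F (z k) ∈ zbar k + gamma A (zbar k) *)
  (forall k, A (zbar k) (gamma^-1 *: (z k - gamma *: F (z k) - zbar k))) ->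
  (forall k, z k.+1 = z k + alpha *: (H (zbar k) - H (z k))) ->
  let kappa := alpha * (1 + 2 * delta / gamma - alpha) in
  [/\ (forall zs, Sstar zs -> forall m : nat,
         \big[Num.min/enorm (H (zbar 0%N) - H (z 0%N)) ^+ 2]_(k < m.+1)
            (enorm (H (zbar k) - H (z k)) ^+ 2)
         <= enorm (z0 - zs) ^+ 2 / (kappa * m.+1%:R)),
      bounded_seq zbar,
      (forall x, limit_point zbar x -> zer (sum_op A F) x) &
      (gamma < 1 / L -> (forall x, Sstar x <-> zer (sum_op A F) x) ->
         exists x, zer (sum_op A F) x /\ converges_to z x /\ converges_to zbar x)].
Proof.
move=> hmax L0 lip [zs0 hzs0] hSzer hrho hmono hg1 hg2 hd1 hd2 ha0 ha1 H hz0 hA hz kappa.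
have g0 : 0 < gamma by move: hg1; rewrite gt_max => /andP[].
have gL : gamma * L <= 1 by rewrite -ler_pdivlMr.
have kap : 0 < kappa by rewrite /kappa mulr_gt0 // subr_gt0.
set p := fun k => H (zbar k) - H (z k).
have step : forall zs, Sstar zs -> forall k,
    enorm (z k.+1 - zs) ^+ 2 <= enorm (z k - zs) ^+ 2 - kappa * enorm (p k) ^+ 2.
  move=> zs hzs k; rewrite hz.
  exact: (fejer_step g0 (ltW L0) gL lip hd2 (ltW ha0) (hmono zs hzs) (hA k)).
have sumfact : forall zs, Sstar zs -> forall m,
    enorm (z m - zs) ^+ 2 + kappa * \sum_(k < m) enorm (p k) ^+ 2
    <= enorm (z0 - zs) ^+ 2.
  move=> zs hzs; elim=> [|m IH]; first by rewrite big_ord0 mulr0 addr0 hz0.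
  rewrite big_ord_recr /= mulrDr.
  have := step zs hzs m; lra.
have zbd : forall zs, Sstar zs -> forall k, enorm (z k - zs) <= enorm (z0 - zs).
  move=> zs hzs k; apply: le_sq; first exact: enorm_ge0.
  have := sumfact zs hzs k.
  have : 0 <= kappa * \sum_(i < k) enorm (p i) ^+ 2.
    by apply: mulr_ge0; [exact: ltW | apply: sumr_ge0 => i _; exact: sqr_ge0].
  lra.
have psmall : forall e, 0 < e -> exists N, forall k, (N <= k)%N -> enorm (p k) < e.
  move=> e e0.
  have a0 : forall k, 0 <= enorm (p k) ^+ 2 by move=> k; rewrite sqr_ge0.
  have hC : forall m, \sum_(k < m) enorm (p k) ^+ 2 <= enorm (z0 - zs0) ^+ 2 / kappa.
    move=> m; rewrite ler_pdivlMr // mulrC.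
    have := sumfact zs0 hzs0 m; have := sqr_ge0 (enorm (z m - zs0)). lra.
  have [N hN] := @tail_small R (fun k => enorm (p k) ^+ 2) _ a0 hC (e ^+ 2) (exprn_gt0 _ e0).
  exists N => k hk; apply: lt_sq; [exact: enorm_ge0 | exact: hN | exact: ltW].
have part3 : forall x, limit_point zbar x -> zer (sum_op A F) x.
  move=> x hx.
  apply: (closed_zer (L := L) (v := fun k => gamma^-1 *:
            ((z k - gamma *: F (z k)) - (zbar k - gamma *: F (zbar k))))
            hmax (ltW L0) lip _ _ hx).
    move=> k; apply: resolvent_sum; first by rewrite gt_eqF.
    exact: hA.
  move=> e e0; have [N hN] := psmall (gamma * e) (mulr_gt0 g0 e0).
  exists N => k hk.
  have -> : (z k - gamma *: F (z k)) - (zbar k - gamma *: F (zbar k)) = - p k.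
    by apply/rowP => i; rewrite /p /H !mxE; ring.
  rewrite enormZ enormN ger0_norm; last by rewrite invr_ge0; exact: ltW.
  by rewrite mulrC ltr_pdivrMr // mulrC; apply: hN.
split => //.
- move=> zs hzs m.
  set mn := \big[_/_]_(k < m.+1) _.
  have hmin : forall i, (i <= m)%N -> mn <= enorm (p i) ^+ 2.
    by move=> i hi; apply: (bigmin_le (fun k => enorm (p k) ^+ 2)).
  have hs : mn *+ m.+1 <= \sum_(k < m.+1) enorm (p k) ^+ 2.
    have -> : mn *+ m.+1 = \sum_(k < m.+1) mn by rewrite sumr_const card_ord.
    by apply: ler_sum => i _; apply: hmin; rewrite -ltnS.
  have hs2 := sumfact zs hzs m.+1.
  have e0 := sqr_ge0 (enorm (z m.+1 - zs)).
  have kpos : 0 < kappa * m.+1%:R by apply: mulr_gt0 => //; rewrite ltr0n.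
  rewrite (ler_pdivlMr _ _ kpos).
  have := ler_wpM2l (ltW kap) hs.
  rewrite -mulr_natr. lra.
- exists (enorm zs0 + (1 + gamma * L) * enorm (z0 - zs0)) => k.
  have h1 := zb_bound (hmax.1) g0 (ltW L0) lip (hSzer zs0 hzs0) (hA k).
  have h2 := zbd zs0 hzs0 k.
  have -> : zbar k = (zbar k - zs0) + zs0 by rewrite subrK.
  apply: (le_trans (enormD _ _)).
  have : (1 + gamma * L) * enorm (z k - zs0) <= (1 + gamma * L) * enorm (z0 - zs0).
    apply: ler_wpM2l => //; have : 0 <= gamma * L by apply: mulr_ge0; exact: ltW.
    lra.
  lra.
- move=> hlt hS.
  have gL' : gamma * L < 1 by rewrite -ltr_pdivlMr.
  have hw : forall k, enorm (z k - zbar k) * (1 - gamma * L) <= enorm (p k).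
    move=> k; set w := z k - zbar k; set d := F (z k) - F (zbar k).
    have e1 : w = (- p k) + gamma *: d.
      by apply/rowP => i; rewrite /p /H !mxE; ring.
    have h := enormD (- p k) (gamma *: d).
    rewrite -e1 enormN enormZ ger0_norm ?(ltW g0) // in h.
    have := lip (z k) (zbar k); rewrite -/d -/w => hl.
    have := ler_wpM2l (ltW g0) hl. lra.
  have c0 : 0 < 1 - gamma * L by rewrite subr_gt0.
  have wsmall : forall e, 0 < e -> exists N, forall k, (N <= k)%N -> enorm (z k - zbar k) < e.
    move=> e e0; have [N hN] := psmall (e * (1 - gamma * L)) (mulr_gt0 e0 c0).
    exists N => k hk; rewrite -(ltr_pM2r c0).
    exact: le_lt_trans (hw k) (hN k hk).
  have zb2 : forall k, enorm (z k) <= enorm zs0 + enorm (z0 - zs0).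
    move=> k; have -> : z k = (z k - zs0) + zs0 by rewrite subrK.
    apply: (le_trans (enormD _ _)); have := zbd zs0 hzs0 k; lra.
  have [x hx] := BWmod.bw zb2.
  have hxb : limit_point zbar x.
    move=> e e0 N; have e2 : 0 < e / 2 by rewrite divr_gt0.
    have [N1 hN1] := wsmall _ e2.
    have [k [hk hk']] := hx _ e2 (maxn N N1).
    exists k; split; first exact: leq_trans (leq_maxl _ _) hk.
    have -> : zbar k - x = (zbar k - z k) + (z k - x) by rewrite addrA subrK.
    apply: (le_lt_trans (enormD _ _)); rewrite enormB.
    have := hN1 k (leq_trans (leq_maxr _ _) hk); lra.
  have hzx := part3 x hxb.
  have hSx := (hS x).2 hzx.
  have mono : forall k, enorm (z k.+1 - x) <= enorm (z k - x).
    move=> k; apply: le_sq; first exact: enorm_ge0.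
    have := step x hSx k.
    have : 0 <= kappa * enorm (p k) ^+ 2 by apply: mulr_ge0; [exact: ltW | exact: sqr_ge0].
    lra.
  have mono' : forall k d, enorm (z (k + d)%N - x) <= enorm (z k - x).
    move=> k; elim=> [|d IH]; first by rewrite addn0.
    by rewrite addnS; apply: le_trans (mono _) IH.
  have convz : converges_to z x.
    move=> e e0; have [k [_ hk]] := hx e e0 0%N.
    exists k => j hj; rewrite -(subnKC hj).
    exact: le_lt_trans (mono' k (j - k)%N) hk.
  exists x; split => //; split => //.
  move=> e e0; have e2 : 0 < e / 2 by rewrite divr_gt0.
  have [N1 hN1] := wsmall _ e2; have [N2 hN2] := convz _ e2.
  exists (maxn N1 N2) => k hk.
  have -> : zbar k - x = (zbar k - z k) + (z k - x) by rewrite addrA subrK.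
  apply: (le_lt_trans (enormD _ _)); rewrite enormB.
  have := hN1 k (leq_trans (leq_maxl _ _) hk).
  have := hN2 k (leq_trans (leq_maxr _ _) hk); lra.
Qed.
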